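(* Let $n\ge1$ and $P\ge1$ be integers, $a_0\in[0,2]$ and $a_1\in[0,P-1]$, and define $$\mathcal{C}'_{2,3,P}=\{\boldsymbol{x}\in\Sigma_2^n:\ \mathrm{VT}^{(0)}(\boldsymbol{x})\equiv a_0\pmod 3,\ \mathrm{VT}^{(1)}(\boldsymbol{x})\equiv a_1\pmod P\}.$$ Then for any two distinct $\boldsymbol{x},\boldsymbol{y}\in\mathcal{C}'_{2,3,P}$, if the difference between the largest and the smallest index at which they differ is less than $P$, then $d_H(\boldsymbol{x},\boldsymbol{y})\ge3$. Moreover, there exists a choice of $a_0,a_1$ such that $r(\mathcal{C}'_{2,3,P})\le\log_2P+\log_23$.
   Context: $\Sigma_2=\{0,1\}$. For $\boldsymbol{x}\in\Sigma_2^n$, $x[i]$ is its $i$-th entry and $\mathrm{VT}^{(k)}(\boldsymbol{x})=\sum_{i=1}^n i^kx[i]$. $d_H$ is Hamming distance. Redundancy: $r(\mathcal{C})=n-\log_2|\mathcal{C}|$. *)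

(* Defs.v *)
From mathcomp Require Import all_boot.
From Stdlib Require Import Reals.

Set Implicit Arguments.
Unset Strict Implicit.
Unset Printing Implicit Defensive.

(* binary words of length n; position i : 'I_n is the paper's index i+1 *)
Notation word n := {ffun 'I_n -> bool}.

Definition VT (n k : nat) (x : word n) : nat :=
  \sum_(i < n) (i.+1) ^ k * (x i : nat).

Definition dH (n : nat) (x y : word n) : nat := #|[set i | x i != y i]|.

Definition codeC (n P a0 a1 : nat) : {set word n} :=
  [set x : word n | (VT 0 x %% 3 == a0) && (VT 1 x %% P == a1)].

Definition log2 (x : R) : R := (ln x / ln 2)%R.

Definition redundancy (n : nat) (C : {set word n}) : R :=
  (INR n - log2 (INR #|C|))%R.

(* Main.v *)
Require Import Defs.
From mathcomp Require Import all_boot.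
From mathcomp Require Import zify.
From Stdlib Require Import Reals Lra.

Lemma VT_split n k (x y : word n) :
  VT k x + \sum_(l in [set i | x i != y i]) (l.+1) ^ k * (y l : nat) =
  VT k y + \sum_(l in [set i | x i != y i]) (l.+1) ^ k * (x l : nat).
Proof.
rewrite /VT (bigID (fun l => l \in [set i | x i != y i])) /=.
rewrite [X in _ = X + _](bigID (fun l => l \in [set i | x i != y i])) /=.
have -> : \sum_(i < n | i \notin [set i | x i != y i]) i.+1 ^ k * x i =
          \sum_(i < n | i \notin [set i | x i != y i]) i.+1 ^ k * y i.
  by apply: eq_bigr => i; rewrite inE negbK => /eqP ->.
rewrite addnAC [RHS]addnAC; congr (_ + _); exact: addnC.
Qed.

Lemma nomod d a b : 0 < d < 3 -> a %% 3 = b %% 3 -> a = b + d -> False.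
Proof. lia. Qed.

Lemma nomodP P a d : 0 < d < P -> (a + d) %% P = a %% P -> False.
Proof.
move=> /andP [d0 dP] h.
have : (a + d == a + 0 %[mod P]) by rewrite addn0 h.
rewrite eqn_modDl mod0n modn_small // => /eqP; lia.
Qed.

Lemma nomodP2 P a b d : a %% P = b %% P -> (a = b + d \/ b = a + d) -> 0 < d < P -> False.
Proof.
move=> h [e|e] hd; rewrite e in h; [apply: (@nomodP P b d hd) | apply: (@nomodP P a d hd)]; by rewrite h.
Qed.

Lemma part1 n P a0 a1 (x y : word n) :
  x \in codeC n P a0 a1 -> y \in codeC n P a0 a1 -> x != y ->
  (forall i j : 'I_n, x i != y i -> x j != y j -> j - i < P) ->
  3 <= dH x y.
Proof.
rewrite !inE => /andP [/eqP hx0 /eqP hx1] /andP [/eqP hy0 /eqP hy1] xy hw.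
rewrite /dH; set D := [set i | x i != y i].
have s0 := @VT_split _ 0 x y; have s1 := @VT_split _ 1 x y; rewrite -/D in s0 s1.
rewrite leqNgt; apply/negP => hD.
have : (#|D| == 0) || (#|D| == 1) || (#|D| == 2) by lia.
case/orP; [case/orP|].
- move/eqP/cards0_eq => D0; move/negP: xy; apply; apply/eqP/ffunP => i.
  apply/eqP; apply/negPn/negP => hi.
  have : i \in D by rewrite inE.
  by rewrite D0 inE.
- case/cards1P => i Di; rewrite Di !big_set1 in s0 s1.
  move: s0; have : i \in D by rewrite Di inE.
  rewrite inE; case: (x i); case: (y i) => // _ /= s0; lia.
- case/cards2P => i [j [ij Dij]].
  have ijD : i \notin [set j] by rewrite inE.
  rewrite Dij !big_setU1 // !big_set1 in s0 s1.
  have : i \in D by rewrite Dij !inE eqxx.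
  have : j \in D by rewrite Dij !inE eqxx orbT.
  rewrite !inE => hj hi.
  have w1 := hw i j hi hj; have w2 := hw j i hj hi.
  have ij' : (i : nat) != j by [].
  move: hi hj s0 s1; rewrite /= ?expn1 ?expn0 ?mul1n.
  case: (x i); case: (y i) => //= _; case: (x j); case: (y j) => //= _ s0 s1.
  + lia.
  + have e : VT 1 x %% P = VT 1 y %% P by rewrite hx1 hy1.
    rewrite ?Nat.mul_1_r ?muln0 ?muln1 ?addn0 ?add0n in s1.
    case: (ltngtP i j) => [lt|gt|eq]; last by move: ij; rewrite (val_inj eq) eqxx.
    * by apply: (@nomodP2 P _ _ (j - i) e); lia.
    * by apply: (@nomodP2 P _ _ (i - j) e); lia.
  + have e : VT 1 x %% P = VT 1 y %% P by rewrite hx1 hy1.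
    rewrite ?Nat.mul_1_r ?muln0 ?muln1 ?addn0 ?add0n in s1.
    case: (ltngtP i j) => [lt|gt|eq]; last by move: ij; rewrite (val_inj eq) eqxx.
    * by apply: (@nomodP2 P _ _ (j - i) e); lia.
    * by apply: (@nomodP2 P _ _ (i - j) e); lia.
  + lia.
Qed.

Lemma count_code n P (hP : 0 < P) :
  \sum_(p : 'I_3 * 'I_P) #|codeC n P p.1 p.2| = expn 2 n.
Proof.
have -> : expn 2 n = #|{ffun 'I_n -> bool}| by rewrite card_ffun card_bool card_ord.
rewrite -sum1_card.
rewrite (eq_bigr (fun p : 'I_3 * 'I_P => \sum_(x : word n) (if x \in codeC n P p.1 p.2 then 1 else 0))); last first.
  by move=> p _; rewrite -sum1_card big_mkcond.
rewrite exchange_big /=; apply: eq_bigr => x _.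
pose k : 'I_3 * 'I_P := (Ordinal (ltn_pmod (VT 0 x) (isT : 0 < 3)), Ordinal (ltn_pmod (VT 1 x) hP)).
rewrite (bigD1 k) //= big1 ?addn0.
  by rewrite inE !eqxx.
move=> [p1 p2] /= hp; rewrite inE; case: ifP => // /andP [/eqP h1 /eqP h2].
move/negP: hp; case; apply/eqP; congr pair; apply: val_inj => /=; by rewrite ?h1 ?h2.
Qed.

Lemma exists_big n P (hP : 0 < P) :
  exists a0 a1, a0 <= 2 /\ a1 <= P - 1 /\ expn 2 n <= 3 * P * #|codeC n P a0 a1|.
Proof.
have c0 : 0 < #|{: 'I_3 * 'I_P}| by rewrite card_prod !card_ord; lia.
have [[p1 p2] hm] := eq_bigmax (fun p : 'I_3 * 'I_P => #|codeC n P p.1 p.2|) c0.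
exists p1, p2; split; first by have := ltn_ord p1; lia.
split; first by have := ltn_ord p2; lia.
rewrite -(@count_code n P hP).
have : \sum_(p : 'I_3 * 'I_P) #|codeC n P p.1 p.2| <= \sum_(p : 'I_3 * 'I_P) \max_(i : 'I_3 * 'I_P) #|codeC n P i.1 i.2|.
  by apply: leq_sum => p _; exact: (leq_bigmax (F := fun i : 'I_3 * 'I_P => #|codeC n P i.1 i.2|)).
rewrite sum_nat_const card_prod !card_ord hm /=; lia.
Qed.

Lemma INR_exp2 n : INR (expn 2 n) = (2 ^ n)%R.
Proof.
elim: n => [|n IH] //=; rewrite expnS -multE mult_INR IH /=; lra.
Qed.

Theorem theorem8 (n P : nat) (hn : 1 <= n) (hP : 1 <= P) :
  (forall a0 a1 : nat, a0 <= 2 -> a1 <= P - 1 ->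
    forall x y : word n, x \in codeC n P a0 a1 -> y \in codeC n P a0 a1 ->
      x != y ->
      (* largest differing index minus smallest differing index < P *)
      (forall i j : 'I_n, x i != y i -> x j != y j -> j - i < P) ->
      3 <= dH x y)
  /\
  (exists a0 a1 : nat, a0 <= 2 /\ a1 <= P - 1 /\
     (redundancy (codeC n P a0 a1) <= log2 (INR P) + log2 (INR 3))%R).
Proof.
split.
  by move=> a0 a1 _ _ x y; apply: part1.
have [a0 [a1 [h0 [h1 hb]]]] := @exists_big n P hP.
exists a0, a1; split => //; split => //.
set c := #|codeC n P a0 a1| in hb *.
have c1 : 0 < c by move: hb; rewrite -!mulnA; have := expn_gt0 2 n; lia.
have hR : (2 ^ n <= INR 3 * INR P * INR c)%R.
  rewrite -INR_exp2 -!mult_INR; apply: le_INR; apply/leP; exact: hb.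
have Pp : (0 < INR P)%R by apply: lt_0_INR; apply/ltP.
have cp : (0 < INR c)%R by apply: lt_0_INR; apply/ltP.
have l2 : (0 < ln 2)%R by rewrite -ln_1; apply: ln_increasing; lra.
have hl : (INR n * ln 2 <= ln (INR c) + ln (INR P) + ln (INR 3))%R.
  rewrite -ln_pow; last lra.
  rewrite -!ln_mult; try (simpl; lra); try (apply: Rmult_lt_0_compat; simpl; lra).
  have pw : (0 < 2 ^ n)%R by apply: pow_lt; lra.
  case: (Rle_lt_or_eq_dec _ _ hR) => h; last by rewrite h; simpl; right; f_equal; lra.
  left; apply: ln_increasing => //; simpl in h |- *; lra.
rewrite /redundancy /log2.
apply: (Rmult_le_reg_r (ln 2)) => //.
have e1 : ((INR n - ln (INR c) / ln 2) * ln 2 = INR n * ln 2 - ln (INR c))%R by field; lra.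
have e2 : ((ln (INR P) / ln 2 + ln (INR 3) / ln 2) * ln 2 = ln (INR P) + ln (INR 3))%R by field; lra.
rewrite e1 e2; lra.
Qed.
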